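(* Let $\mathbb{F}$ be a field of characteristic zero, $n\ge1$, $a\in(\mathbb{F}^* )^n$ and $B\in\mathbb{F}^{n\times n}$ symmetric. Suppose that $G=G(a,B)$ is twin-free and $\sum_{i=1}^n a_i\neq0$. Then $h(F_1,G)\,h(F_2,G)=h(F_1\cdot F_2,G)$ for all $F_1,F_2\in\mathcal{G}_1$ if and only if $\Gamma(a,B)$ acts transitively on $[n]$.
   Context: Graphs are finite multigraphs, possibly with loops and multiple edges. $G(a,B)$ is the weighted graph on vertex set $[n]$ with vertex weights $a_i$ and edge weights $B_{i,j}$; it is twin-free if no two rows of $B$ are equal. For a graph $F$, $\hom(F,G)=\sum_{\phi:V(F)\to[n]}\prod_{v\in V(F)}a_{\phi(v)}\prod_{uv\in E(F)}B_{\phi(u),\phi(v)}$ (edges with multiplicity) and $h(F,G)=\hom(F,G)/\big(\sum_{i=1}^n a_i\big)^{c(F)}$, where $c(F)$ is the number of connected components of $F$. $\mathcal{G}_1$ is the set of graphs with one labelled vertex; for $F_1,F_2\in\mathcal{G}_1$, $F_1\cdot F_2$ is obtained from their disjoint union by identifying the two labelled vertices; labels are forgotten when evaluating $h$. $\Gamma(a,B)$ is the group of permutations $\gamma$ of $[n]$ with $a_{\gamma(i)}=a_i$ and $B_{\gamma(i),\gamma(j)}=B_{i,j}$ for all $i,j$. *)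

(* Defs.v *)
From HB Require Import structures.
From mathcomp Require Import all_boot all_order all_algebra all_fingroup.
Set Implicit Arguments. Unset Strict Implicit. Unset Printing Implicit Defensive.
Import Order.TTheory GRing.Theory.
Local Open Scope ring_scope.

(* A finite multigraph (loops and multiple edges allowed) with one labelled
   vertex: vertices 'I_nv, edges a list (with multiplicity) of vertex pairs. *)
Record graph1 := Graph1 {
  nv : nat;
  lab : 'I_nv;
  edges : seq ('I_nv * 'I_nv)
}.

Definition adj (F : graph1) : rel 'I_(nv F) :=
  fun u v => ((u, v) \in edges F) || ((v, u) \in edges F).

Definition ncomp (F : graph1) : nat := n_comp (@adj F) predT.

(* F1 . F2 : disjoint union with the two labelled vertices identified *)
Definition glue_nv (F1 F2 : graph1) : nat := nv F1 + (nv F2).-1.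

Definition emb1 (F1 F2 : graph1) (v : 'I_(nv F1)) : 'I_(glue_nv F1 F2) :=
  widen_ord (leq_addr _ _) v.

Definition emb2 (F1 F2 : graph1) (w : 'I_(nv F2)) : 'I_(glue_nv F1 F2) :=
  if w == lab F2 then emb1 F2 (lab F1)
  else insubd (emb1 F2 (lab F1))
              (nv F1 + (if (w < lab F2)%N then val w else (val w).-1)).

Definition glue (F1 F2 : graph1) : graph1 :=
  @Graph1 (glue_nv F1 F2) (emb1 F2 (lab F1))
    ([seq (emb1 F2 p.1, emb1 F2 p.2) | p <- edges F1] ++
     [seq (emb2 F1 p.1, emb2 F1 p.2) | p <- edges F2]).

Definition hom (K : fieldType) (n : nat) (a : 'I_n -> K) (B : 'M[K]_n)
  (F : graph1) : K :=
  \sum_(phi : {ffun 'I_(nv F) -> 'I_n})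
     ((\prod_(v : 'I_(nv F)) a (phi v)) *
      \prod_(e <- edges F) B (phi e.1) (phi e.2)).

Definition hdens (K : fieldType) (n : nat) (a : 'I_n -> K) (B : 'M[K]_n)
  (F : graph1) : K :=
  hom a B F / (\sum_i a i) ^+ ncomp F.

Definition twin_free (K : fieldType) (n : nat) (B : 'M[K]_n) : Prop :=
  forall i j : 'I_n, row i B = row j B -> i = j.

Definition autG (K : fieldType) (n : nat) (a : 'I_n -> K) (B : 'M[K]_n)
  : {set {perm 'I_n}} :=
  [set g : {perm 'I_n} | [forall i, a (g i) == a i] &&
                         [forall i, forall j, B (g i) (g j) == B i j]].

Definition transitive_on_all (n : nat) (S : {set {perm 'I_n}}) : Prop :=
  forall i j : 'I_n, exists2 g, g \in S & g i = j.

(* Main.v *)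
Require Import Defs.
From HB Require Import structures.
From mathcomp Require Import all_boot all_order all_algebra all_fingroup.
From mathcomp Require Import ring.
From Stdlib Require Import Classical.
Import GRing.Theory.
Local Open Scope ring_scope.

Set Implicit Arguments. Unset Strict Implicit. Unset Printing Implicit Defensive.

Definition fjoin (I : finType) (p q : nat) (f : {ffun 'I_p -> I}) (g : {ffun 'I_q -> I})
  : {ffun 'I_(p + q) -> I} :=
  [ffun v => match split v with inl x => f x | inr y => g y end].

Lemma fjoinl (I : finType) p q (f : {ffun 'I_p -> I}) g x :
  fjoin f g (lshift q x) = f x.
Proof. by rewrite ffunE (unsplitK (inl _ x)). Qed.

Lemma fjoinr (I : finType) p q (f : {ffun 'I_p -> I}) (g : {ffun 'I_q -> I}) y :
  fjoin f g (rshift p y) = g y.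
Proof. by rewrite ffunE (unsplitK (inr _ y)). Qed.

Lemma sum_fjoin (R : nmodType) (I : finType) p q (F : {ffun 'I_(p + q) -> I} -> R) :
  \sum_h F h = \sum_(f : {ffun 'I_p -> I}) \sum_(g : {ffun 'I_q -> I}) F (fjoin f g).
Proof.
rewrite pair_big /=.
rewrite (reindex (fun fg : {ffun 'I_p -> I} * {ffun 'I_q -> I} => fjoin fg.1 fg.2)) //.
exists (fun h : {ffun 'I_(p + q) -> I} => ([ffun x => h (lshift q x)] : {ffun 'I_p -> I}, [ffun y => h (rshift p y)] : {ffun 'I_q -> I})).
  move=> [f g] _ /=; congr pair; apply/ffunP => x; rewrite ffunE ?fjoinl ?fjoinr //.
move=> h _ /=; apply/ffunP => v; rewrite ffunE.
by case: splitP => [x|y] /= E; rewrite ffunE; congr (h _); apply/val_inj.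
Qed.

Definition fext (I : finType) N (l : 'I_N) (i : I) (g : {ffun 'I_N.-1 -> I}) : {ffun 'I_N -> I} :=
  [ffun w => if unlift l w is Some j then g j else i].

Lemma fext_lab (I : finType) N (l : 'I_N) (i : I) g : fext l i g l = i.
Proof. by rewrite ffunE unlift_none. Qed.

Lemma fext_lift (I : finType) N (l : 'I_N) (i : I) g j : fext l i g (lift l j) = g j.
Proof. by rewrite ffunE liftK. Qed.

Lemma sum_fext (R : nmodType) (I : finType) N (l : 'I_N) (F : {ffun 'I_N -> I} -> R) :
  \sum_h F h = \sum_(i : I) \sum_(g : {ffun 'I_N.-1 -> I}) F (fext l i g).
Proof.
rewrite pair_big /=.
rewrite (reindex (fun ig : I * {ffun 'I_N.-1 -> I} => fext l ig.1 ig.2)) //.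
exists (fun h : {ffun 'I_N -> I} => (h l, [ffun j => h (lift l j)] : {ffun 'I_N.-1 -> I})).
  move=> [i g] _ /=; rewrite fext_lab; congr pair; apply/ffunP => j.
  by rewrite ffunE fext_lift.
move=> h _ /=; apply/ffunP => w; rewrite ffunE.
by case: unliftP => [j ->|->]; rewrite ?ffunE.
Qed.

Lemma sum_fext_lab (R : nmodType) (I : finType) N (l : 'I_N) (i : I) (F : {ffun 'I_N -> I} -> R) :
  \sum_(h : {ffun 'I_N -> I} | h l == i) F h = \sum_(g : {ffun 'I_N.-1 -> I}) F (fext l i g).
Proof.
rewrite big_mkcond (sum_fext l) /= (bigD1 i) //= [X in _ + X]big1 ?addr0.
  by apply: eq_bigr => g _; rewrite fext_lab eqxx.
by move=> k /negbTE kn; apply: big1 => g _; rewrite fext_lab kn.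
Qed.
Goal True. Abort.

Definition Wt (K : fieldType) (n : nat) (a : 'I_n -> K) (B : 'M[K]_n) (F : graph1)
  (phi : {ffun 'I_(nv F) -> 'I_n}) : K :=
  (\prod_(v : 'I_(nv F)) a (phi v)) * \prod_(e <- edges F) B (phi e.1) (phi e.2).

Definition Tl (K : fieldType) (n : nat) (a : 'I_n -> K) (B : 'M[K]_n) (F : graph1) (i : 'I_n) : K :=
  \sum_(phi : {ffun 'I_(nv F) -> 'I_n} | phi (lab F) == i) Wt a B phi.

Lemma hom_Tl (K : fieldType) (n : nat) (a : 'I_n -> K) (B : 'M[K]_n) (F : graph1) :
  Defs.hom a B F = \sum_i Tl a B F i.
Proof.
rewrite /Defs.hom /Tl.
rewrite (exchange_big_dep xpredT) //=.
apply: eq_bigr => phi _.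
rewrite (bigD1 (phi (lab F))) //= [X in _ + X]big1 ?addr0 //.
by move=> i /andP[/eqP <-]; rewrite eqxx.
Qed.

Lemma emb1E (F1 F2 : graph1) x : emb1 F2 x = lshift (nv F2).-1 x :> 'I_(nv F1 + (nv F2).-1).
Proof. by apply/val_inj. Qed.

Lemma emb2_lab (F1 F2 : graph1) : emb2 F1 (lab F2) = emb1 F2 (lab F1).
Proof. by rewrite /emb2 eqxx. Qed.

Lemma emb2_lift (F1 F2 : graph1) j :
  emb2 F1 (lift (lab F2) j) = rshift (nv F1) j :> 'I_(nv F1 + (nv F2).-1).
Proof.
rewrite /emb2 eq_sym (negbTE (neq_lift _ _)); apply/val_inj.
rewrite val_insubd /= /bump.
have -> : (if ((lab F2 <= j) + j < lab F2)%N then ((lab F2 <= j) + j)%N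
           else ((lab F2 <= j) + j).-1) = j.
  by case: (leqP (lab F2) j) => h /=; [rewrite add1n ltnNge (leqW h) | rewrite add0n h].
by rewrite ltn_add2l ltn_ord.
Qed.

Lemma fjoin_emb1 (I : finType) (F1 F2 : graph1) (f : {ffun 'I_(nv F1) -> I})
  (g : {ffun 'I_(nv F2).-1 -> I}) x :
  fjoin f g (emb1 F2 x) = f x.
Proof. by rewrite emb1E fjoinl. Qed.

Lemma fjoin_emb2 (I : finType) (F1 F2 : graph1) (f : {ffun 'I_(nv F1) -> I})
  (g : {ffun 'I_(nv F2).-1 -> I}) w :
  fjoin f g (emb2 F1 w) = fext (lab F2) (f (lab F1)) g w.
Proof.
case: (unliftP (lab F2) w) => [j ->|->].
  by rewrite emb2_lift fjoinr fext_lift.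
by rewrite emb2_lab fjoin_emb1 fext_lab.
Qed.

Lemma Wt_glue (K : fieldType) (n : nat) (a : 'I_n -> K) (B : 'M[K]_n) (F1 F2 : graph1)
  (f : {ffun 'I_(nv F1) -> 'I_n}) (g : {ffun 'I_(nv F2).-1 -> 'I_n}) :
  a (f (lab F1)) * Wt a B (fjoin f g : {ffun 'I_(nv (glue F1 F2)) -> 'I_n})
  = Wt a B f * Wt a B (fext (lab F2) (f (lab F1)) g).
Proof.
rewrite /Wt /=.
rewrite big_split_ord /=.
rewrite big_cat !big_map /=.
rewrite (bigD1_ord (lab F2)) //=.
under eq_bigr do rewrite fjoinl.
have -> : \prod_(i < (nv F2).-1) a (fjoin f g (rshift (nv F1) i)) = \prod_(i < (nv F2).-1) a (g i).
  by apply: eq_bigr => i _; rewrite fjoinr.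
have -> : \prod_(j <- edges F1) B (fjoin f g (emb1 F2 j.1)) (fjoin f g (emb1 F2 j.2))
   = \prod_(e <- edges F1) B (f e.1) (f e.2).
  by apply: eq_bigr => e _; rewrite !fjoin_emb1.
have -> : \prod_(j <- edges F2) B (fjoin f g (emb2 F1 j.1)) (fjoin f g (emb2 F1 j.2))
   = \prod_(e <- edges F2) B (fext (lab F2) (f (lab F1)) g e.1) (fext (lab F2) (f (lab F1)) g e.2).
  by apply: eq_bigr => e _; rewrite !fjoin_emb2.
under [X in _ = _ * (_ * X * _)]eq_bigr do rewrite fext_lift.
rewrite fext_lab.
ring.
Qed.

Lemma Tl_glue (K : fieldType) (n : nat) (a : 'I_n -> K) (B : 'M[K]_n) (F1 F2 : graph1) i :
  a i * Tl a B (glue F1 F2) i = Tl a B F1 i * Tl a B F2 i.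
Proof.
rewrite /Tl big_mkcond /=.
rewrite (sum_fjoin (p := nv F1) (q := (nv F2).-1)).
rewrite (sum_fext_lab (lab F2)) big_distrl /= mulr_sumr.
rewrite [RHS]big_mkcond /=.
apply: eq_bigr => f _.
rewrite mulr_sumr.
case: eqP => [<-|ne].
  rewrite mulr_sumr; apply: eq_bigr => g _.
  by rewrite fjoin_emb1 eqxx Wt_glue.
by apply: big1 => g _; rewrite fjoin_emb1; case: eqP => // _; rewrite mulr0.
Qed.

Lemma conn_inv (T : finType) (e : rel T) (U : Type) (k : T -> U) :
  (forall x y, e x y -> k x = k y) -> forall x y, connect e x y -> k x = k y.
Proof.
move=> H x y /connectP [p Hp ->] {y}.
elim: p x Hp => //= z p IH x /andP [exz Hp].
by rewrite (H _ _ exz) (IH _ Hp).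
Qed.

Lemma conn_map (T T' : finType) (e : rel T) (e' : rel T') (h : T -> T') :
  (forall x y, e x y -> connect e' (h x) (h y)) ->
  forall x y, connect e x y -> connect e' (h x) (h y).
Proof.
move=> H x y /connectP [p Hp ->] {y}.
elim: p x Hp => //= z p IH x /andP [exz Hp].
exact: connect_trans (H _ _ exz) (IH _ Hp).
Qed.

Lemma ncomp_image (T U : finType) (e : rel T) (k : T -> U) :
  connect_sym e -> (forall x y, connect e x y <-> k x = k y) ->
  n_comp e predT = #|[set k x | x in T]|.
Proof.
move=> sym Hk.
have -> : n_comp e predT = #|[set x | roots e x]|.
  by apply: eq_card => x; rewrite !inE /= andbT.
have -> : [set k x | x in T] = [set k x | x in [set x | roots e x]].
  apply/setP => u; apply/imsetP/imsetP => [[x _ ->]|[x _ ->]]; last by exists x.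
  exists (fingraph.root e x); first by rewrite inE roots_root.
  by apply/Hk; rewrite connect_root.
rewrite card_in_imset //.
move=> x y; rewrite !inE => rx ry /Hk cxy.
move: rx ry; rewrite /roots /= => /eqP rx /eqP ry.
rewrite -rx -ry; exact/(fingraph.rootP sym).
Qed.

Lemma adj_sym (F : graph1) : symmetric (@adj F).
Proof. by move=> u v; rewrite /adj orbC. Qed.

Lemma ncompE (F : graph1) : ncomp F = #|[set fingraph.root (@adj F) x | x in 'I_(nv F)]|.
Proof.
apply: ncomp_image; first exact: sym_connect_sym (@adj_sym F).
by move=> x y; split => [/(fingraph.rootP (sym_connect_sym (@adj_sym F)))|/(fingraph.rootP (sym_connect_sym (@adj_sym F)))].
Qed.

Lemma inl_inj (A B : Type) (x y : A) : @inl A B x = inl y -> x = y.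
Proof. by case. Qed.
Lemma inr_inj (A B : Type) (x y : B) : @inr A B x = inr y -> x = y.
Proof. by case. Qed.

Lemma inlr (A B : Type) (x : A) (y : B) : @inl A B x = inr y -> False.
Proof. move=> E; discriminate. Qed.

Definition kap (F1 F2 : graph1) (v : 'I_(nv F1 + (nv F2).-1)) : 'I_(nv F1) + 'I_(nv F2) :=
  match split v with
  | inl x => inl (fingraph.root (@adj F1) x)
  | inr j => if connect (@adj F2) (lift (lab F2) j) (lab F2)
             then inl (fingraph.root (@adj F1) (lab F1))
             else inr (fingraph.root (@adj F2) (lift (lab F2) j))
  end.

Lemma kap_emb1 (F1 F2 : graph1) x : @kap F1 F2 (emb1 F2 x) = inl (fingraph.root (@adj F1) x).
Proof. by rewrite emb1E /kap (unsplitK (inl _ x)). Qed.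

Lemma kap_emb2 (F1 F2 : graph1) w : @kap F1 F2 (emb2 F1 w) =
  if connect (@adj F2) w (lab F2) then inl (fingraph.root (@adj F1) (lab F1))
  else inr (fingraph.root (@adj F2) w).
Proof.
case: (unliftP (lab F2) w) => [j ->|->].
  by rewrite emb2_lift /kap (unsplitK (inr _ j)).
by rewrite emb2_lab kap_emb1 connect0.
Qed.

Lemma glue_cover (F1 F2 : graph1) (v : 'I_(nv (glue F1 F2))) :
  (exists x, v = emb1 F2 x) \/ (exists w, v = emb2 F1 w).
Proof.
case: (splitP (v : 'I_(nv F1 + (nv F2).-1))) => [x|j] E.
  by left; exists x; apply/val_inj; exact: E.
by right; exists (lift (lab F2) j); rewrite emb2_lift; apply/val_inj; exact: E.
Qed.

Lemma adj_glue1 (F1 F2 : graph1) x y : adj x y -> adj (F := glue F1 F2) (emb1 F2 x) (emb1 F2 y).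
Proof.
rewrite /adj /= !mem_cat => /orP [H|H]; apply/orP; [left|right]; apply/orP; left;
  apply/mapP; [exists (x, y)|exists (y, x)] => //.
Qed.

Lemma adj_glue2 (F1 F2 : graph1) x y : adj x y -> adj (F := glue F1 F2) (emb2 F1 x) (emb2 F1 y).
Proof.
rewrite /adj /= !mem_cat => /orP [H|H]; apply/orP; [left|right]; apply/orP; right;
  apply/mapP; [exists (x, y)|exists (y, x)] => //.
Qed.

Lemma sym_adj (F : graph1) : connect_sym (@adj F).
Proof. exact: sym_connect_sym (@adj_sym F). Qed.

Lemma kap_edge (F1 F2 : graph1) u v : (u, v) \in edges (glue F1 F2) -> @kap F1 F2 u = @kap F1 F2 v.
Proof.
rewrite /= mem_cat => /orP [/mapP [[x y] Hp [-> ->]]|/mapP [[x y] Hp [-> ->]]] /=.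
  rewrite !kap_emb1; congr inl; apply/(fingraph.rootP (@sym_adj F1)).
  by apply: connect1; rewrite /adj Hp.
have cxy : connect (@adj F2) x y by apply: connect1; rewrite /adj Hp.
rewrite !kap_emb2 (same_connect (@sym_adj F2) cxy).
by rewrite (elimT (fingraph.rootP (@sym_adj F2)) cxy).
Qed.

Lemma conn_glue (F1 F2 : graph1) (u v : 'I_(nv (glue F1 F2))) :
  connect (@adj (glue F1 F2)) u v <-> @kap F1 F2 u = @kap F1 F2 v.
Proof.
split.
  apply: conn_inv => x y /orP [H|H]; first exact: kap_edge.
  by apply/esym/kap_edge.
have L1 : forall x y, connect (@adj F1) x y -> connect (@adj (glue F1 F2)) (emb1 F2 x) (emb1 F2 y).
  by apply: conn_map => x y /adj_glue1 H; apply: connect1.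
have L2 : forall x y, connect (@adj F2) x y -> connect (@adj (glue F1 F2)) (emb2 F1 x) (emb2 F1 y).
  by apply: conn_map => x y /adj_glue2 H; apply: connect1.
have S := @sym_adj (glue F1 F2).
have S1 := @sym_adj F1.
have S2 := @sym_adj F2.
have M : forall x w, fingraph.root (@adj F1) x = fingraph.root (@adj F1) (lab F1) ->
    connect (@adj F2) w (lab F2) -> connect (@adj (glue F1 F2)) (emb1 F2 x) (emb2 F1 w).
  move=> x w /(fingraph.rootP S1) h1 h2.
  apply: connect_trans (L1 _ _ h1) _; rewrite -emb2_lab.
  by rewrite S; apply: L2.
case: (glue_cover u) => [[x ->]|[w ->]]; case: (glue_cover v) => [[y ->]|[w' ->]];
  rewrite ?kap_emb1 ?kap_emb2.
- by move=> E; have {}E := inl_inj E; apply: L1; apply/(fingraph.rootP S1).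
- case: ifP => c E; last by move: E; move=> E; discriminate.
  by have {}E := inl_inj E; apply: M.
- case: ifP => c E; last by move: E; move=> E; discriminate.
  by have {}E := inl_inj (esym E); rewrite S; apply: M.
case: ifP => c; case: ifP => c' E; try discriminate.
  by apply: L2; apply: connect_trans c _; rewrite S2.
by have {}E := inr_inj E; apply: L2; apply/(fingraph.rootP S2).
Qed.

Lemma ncomp_glue (F1 F2 : graph1) : (ncomp (glue F1 F2) + 1 = ncomp F1 + ncomp F2)%N.
Proof.
rewrite /ncomp (@ncomp_image _ _ _ (@kap F1 F2)); last first.
- exact: conn_glue.
- exact: (@sym_adj (glue F1 F2)).
have E1 := ncompE F1; have E2 := ncompE F2; rewrite /ncomp in E1 E2; rewrite E1 E2.
set R1 := [set fingraph.root (@adj F1) x | x in 'I_(nv F1)].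
set R2 := [set fingraph.root (@adj F2) x | x in 'I_(nv F2)].
set r := fingraph.root (@adj F2) (lab F2).
have S1 := @sym_adj F1.
have S2 := @sym_adj F2.
have -> : [set @kap F1 F2 v | v in 'I_(nv (glue F1 F2))] =
   [set inl x | x in R1] :|: [set inr x | x in R2 :\ r].
  apply/setP => s; apply/imsetP/setUP.
    move=> [v _ ->]; case: (glue_cover v) => [[x ->]|[w ->]].
      by left; rewrite kap_emb1; apply/imsetP; exists (fingraph.root (@adj F1) x) => //; apply/imsetP; exists x.
    rewrite kap_emb2; case: ifP => c.
      by left; apply/imsetP; exists (fingraph.root (@adj F1) (lab F1)) => //; apply/imsetP; exists (lab F1).
    right; apply/imsetP; exists (fingraph.root (@adj F2) w) => //.
    rewrite !inE; apply/andP; split; last by apply/imsetP; exists w.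
    by apply/negP => /eqP /(fingraph.rootP S2); rewrite c.
  case=> /imsetP [y Hy ->].
    case/imsetP: Hy => x _ ->; exists (emb1 F2 x) => //; by rewrite kap_emb1.
  move: Hy; rewrite !inE => /andP [ne /imsetP [w _ Ew]].
  exists (emb2 F1 w) => //; rewrite kap_emb2 Ew; case: ifP => // c.
  by move: ne; rewrite Ew; move/(fingraph.rootP S2): c => ->; rewrite eqxx.
rewrite cardsU.
have -> : [set inl x | x in R1] :&: [set inr x | x in R2 :\ r] = set0.
  apply/setP => s; rewrite !inE; apply/negP => /andP [/imsetP [x _ ->] /imsetP [y _ E]].
  discriminate.
have Hl : injective (@inl 'I_(nv F1) 'I_(nv F2)) by move=> x y E; exact: inl_inj E.
have Hr : injective (@inr 'I_(nv F1) 'I_(nv F2)) by move=> x y E; exact: inr_inj E.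
rewrite cards0 subn0 (card_imset _ Hl) (card_imset _ Hr).
rewrite [#|R2|](cardsD1 r R2).
have -> : r \in R2 by apply/imsetP; exists (lab F2).
by rewrite -addnA addn1 add1n.
Qed.

Lemma hyp_equiv (K : fieldType) (n : nat) (a : 'I_n -> K) (B : 'M[K]_n) (F1 F2 : graph1) :
  \sum_i a i != 0 ->
  (hdens a B F1 * hdens a B F2 = hdens a B (glue F1 F2) <->
   Defs.hom a B F1 * Defs.hom a B F2 = (\sum_i a i) * Defs.hom a B (glue F1 F2)).
Proof.
set S := \sum_i a i => S0.
rewrite /hdens.
have E := ncomp_glue F1 F2.
set c1 := ncomp F1 in E *; set c2 := ncomp F2 in E *; set cg := ncomp (glue F1 F2) in E *.
have Sc : forall k, S ^+ k != 0 by move=> k; rewrite expf_neq0.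
have -> : Defs.hom a B F1 / S ^+ c1 * (Defs.hom a B F2 / S ^+ c2) =
    Defs.hom a B F1 * Defs.hom a B F2 / (S ^+ cg * S).
  rewrite -exprSr -addn1 E exprD; field.
  by rewrite !Sc.
set x := Defs.hom a B F1 * Defs.hom a B F2.
set z := Defs.hom a B (glue F1 F2).
have Scg := Sc cg.
split => H.
  have -> : x = x / (S ^+ cg * S) * (S ^+ cg * S) by rewrite divfK // mulf_neq0.
  rewrite H; field; exact: Scg.
rewrite H; field; rewrite Scg S0 //.
Qed.

Definition tv (K : fieldType) (n : nat) (a : 'I_n -> K) (B : 'M[K]_n) (F : graph1) (i : 'I_n) : K :=
  Tl a B F i / a i.

Lemma hom_tv (K : fieldType) (n : nat) (a : 'I_n -> K) (B : 'M[K]_n) (F : graph1) :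
  (forall i, a i != 0) -> Defs.hom a B F = \sum_i a i * tv a B F i.
Proof.
move=> a0; rewrite hom_Tl; apply: eq_bigr => i _.
by rewrite /tv mulrC divfK.
Qed.

Lemma tv_glue (K : fieldType) (n : nat) (a : 'I_n -> K) (B : 'M[K]_n) (F1 F2 : graph1) i :
  a i != 0 -> tv a B (glue F1 F2) i = tv a B F1 i * tv a B F2 i.
Proof.
move=> a0; rewrite /tv.
have E := Tl_glue a B F1 F2 i.
have -> : Tl a B (glue F1 F2) i = Tl a B F1 i * Tl a B F2 i / a i.
  by rewrite -E [a i * _]mulrC mulfK.
field; exact: a0.
Qed.

Definition g0 : graph1 := @Graph1 1 ord0 [::].

Lemma tv_g0 (K : fieldType) (n : nat) (a : 'I_n -> K) (B : 'M[K]_n) i :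
  a i != 0 -> tv a B g0 i = 1.
Proof.
move=> a0; rewrite /tv /Tl (sum_fext_lab (ord0 : 'I_(nv g0))) /Wt /=.
under eq_bigr do rewrite big_ord1 big_nil mulr1 (fext_lab (ord0 : 'I_1)).
rewrite sumr_const card_ffun card_ord (card_ord 0) expn0 mulr1n.
by rewrite divff.
Qed.

Definition inspan (X : finType) (K : fieldType) (Idx : Type) (g : Idx -> X -> K) (f : X -> K) :=
  exists s : seq (K * Idx), forall x, f x = \sum_(p <- s) p.1 * g p.2 x.

Lemma span_gen (X : finType) (K : fieldType) (Idx : Type) (g : Idx -> X -> K) i :
  inspan g (g i).
Proof. by exists [:: (1, i)] => x; rewrite big_seq1 mul1r. Qed.

Lemma span_add (X : finType) (K : fieldType) (Idx : Type) (g : Idx -> X -> K) f1 f2 :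
  inspan g f1 -> inspan g f2 -> inspan g (fun x => f1 x + f2 x).
Proof.
move=> [s1 H1] [s2 H2]; exists (s1 ++ s2) => x.
by rewrite big_cat /= H1 H2.
Qed.

Lemma span_scale (X : finType) (K : fieldType) (Idx : Type) (g : Idx -> X -> K) c f :
  inspan g f -> inspan g (fun x => c * f x).
Proof.
move=> [s H]; exists [seq (c * p.1, p.2) | p <- s] => x.
by rewrite big_map H mulr_sumr; apply: eq_bigr => p _ /=; rewrite mulrA.
Qed.

Lemma span_ext (X : finType) (K : fieldType) (Idx : Type) (g : Idx -> X -> K) f1 f2 :
  (forall x, f1 x = f2 x) -> inspan g f1 -> inspan g f2.
Proof. by move=> E [s H]; exists s => x; rewrite -E. Qed.

Lemma span_mul (X : finType) (K : fieldType) (Idx : Type) (g : Idx -> X -> K)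
  (gm : Idx -> Idx -> Idx) :
  (forall i j x, g (gm i j) x = g i x * g j x) ->
  forall f1 f2, inspan g f1 -> inspan g f2 -> inspan g (fun x => f1 x * f2 x).
Proof.
move=> Hm f1 f2 [s1 H1] [s2 H2].
exists [seq (p.1 * q.1, gm p.2 q.2) | p <- s1, q <- s2] => x.
rewrite H1 H2 big_distrl /= big_allpairs_dep; apply: eq_bigr => p _.
rewrite mulr_sumr; apply: eq_bigr => q _ /=.
by rewrite Hm; ring.
Qed.

Lemma span_const (X : finType) (K : fieldType) (Idx : Type) (g : Idx -> X -> K) u :
  (forall x, g u x = 1) -> forall c, inspan g (fun _ => c).
Proof.
move=> Hu c; apply: (span_ext (f1 := fun x => c * g u x)); first by move=> x; rewrite Hu mulr1.
exact/span_scale/span_gen.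
Qed.

Lemma span_lin (X : finType) (K : fieldType) (Idx : Type) (g : Idx -> X -> K) (w : X -> K) f :
  (forall i, \sum_x w x * g i x = 0) -> inspan g f -> \sum_x w x * f x = 0.
Proof.
move=> Hw [s H].
under eq_bigr do rewrite H mulr_sumr.
rewrite exchange_big /= big1 // => p _.
under eq_bigr do rewrite mulrCA.
by rewrite -mulr_sumr Hw mulr0.
Qed.

Lemma span_indicator (X : finType) (K : fieldType) (Idx : Type) (g : Idx -> X -> K)
  (gm : Idx -> Idx -> Idx) u :
  (forall i j x, g (gm i j) x = g i x * g j x) -> (forall x, g u x = 1) ->
  forall x0, exists f, [/\ inspan g f,
     (forall y, (forall i, g i y = g i x0) -> f y = 1) &
     (forall y, ~ (forall i, g i y = g i x0) -> f y = 0)].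
Proof.
move=> Hm Hu x0.
suff : forall L : seq X, exists f, [/\ inspan g f,
     (forall y, (forall i, g i y = g i x0) -> f y = 1) &
     (forall y, y \in L -> ~ (forall i, g i y = g i x0) -> f y = 0)].
  by case/(_ (enum X)) => f [H1 H2 H3]; exists f; split => // y; apply: H3; rewrite mem_enum.
elim=> [|y L [f [H1 H2 H3]]].
  by exists (fun _ => 1); split => //; apply: (span_const Hu).
case: (classic (forall i, g i y = g i x0)) => cy.
  exists f; split => // z; rewrite inE => /orP [/eqP -> //|]; exact: H3.
have [i ne] := not_all_ex_not _ _ cy.
have d0 : g i x0 - g i y != 0 by rewrite subr_eq0; apply/eqP => E; apply: ne.
exists (fun z => f z * ((g i z - g i y) / (g i x0 - g i y))); split.
- apply: (span_mul Hm) => //.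
  apply: (span_ext (f1 := fun z => (g i x0 - g i y)^-1 * g i z + (- ((g i x0 - g i y)^-1 * g i y)))).
    by move=> z; ring.
  apply: span_add; first exact/span_scale/span_gen.
  exact: (span_const Hu).
- by move=> z Hz; rewrite H2 // Hz divff // mul1r.
- move=> z; rewrite inE => /orP [/eqP ->|zL] nz; first by rewrite subrr mul0r mulr0.
  by rewrite H3 // mul0r.
Qed.

Record lgraph (n : nat) := LG { hm : nat; hed : seq ('I_(n + hm) * 'I_(n + hm)) }.

Definition fH (K : fieldType) (n : nat) (a : 'I_n -> K) (B : 'M[K]_n) (H : lgraph n)
  (psi : {ffun 'I_n -> 'I_n}) : K :=
  \sum_(chi : {ffun 'I_(hm H) -> 'I_n})
    (\prod_u a (chi u)) * \prod_(e <- hed H) B (fjoin psi chi e.1) (fjoin psi chi e.2).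

Definition LH1 (n : nat) : lgraph n := @LG n 0 [::].

Lemma fH_LH1 (K : fieldType) (n : nat) (a : 'I_n -> K) (B : 'M[K]_n) psi :
  fH a B (LH1 n) psi = 1.
Proof.
rewrite /fH /=.
under eq_bigr do rewrite big_ord0 big_nil mulr1.
by rewrite sumr_const card_ffun card_ord (card_ord 0) expn0 mulr1n.
Qed.

Definition r1 (n m1 m2 : nat) (v : 'I_(n + m1)) : 'I_(n + (m1 + m2)) :=
  match split v with inl k => lshift _ k | inr u => rshift n (lshift m2 u) end.
Definition r2 (n m1 m2 : nat) (v : 'I_(n + m2)) : 'I_(n + (m1 + m2)) :=
  match split v with inl k => lshift _ k | inr u => rshift n (rshift m1 u) end.

Definition LHprod (n : nat) (H1 H2 : lgraph n) : lgraph n :=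
  @LG n (hm H1 + hm H2)
   ([seq (r1 (hm H2) e.1, r1 (hm H2) e.2) | e <- hed H1] ++
    [seq (@r2 n (hm H1) _ e.1, @r2 n (hm H1) _ e.2) | e <- hed H2]).

Lemma fjoin_r1 (I : finType) n m1 m2 (psi : {ffun 'I_n -> I}) (c1 : {ffun 'I_m1 -> I})
  (c2 : {ffun 'I_m2 -> I}) v :
  fjoin psi (fjoin c1 c2) (r1 m2 v) = fjoin psi c1 v.
Proof.
rewrite /r1; case: (split_ordP v) => [k ->|u ->].
  by rewrite !fjoinl.
by rewrite !fjoinr fjoinl.
Qed.

Lemma fjoin_r2 (I : finType) n m1 m2 (psi : {ffun 'I_n -> I}) (c1 : {ffun 'I_m1 -> I})
  (c2 : {ffun 'I_m2 -> I}) v :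
  fjoin psi (fjoin c1 c2) (@r2 n m1 m2 v) = fjoin psi c2 v.
Proof.
rewrite /r2; case: (split_ordP v) => [k ->|u ->].
  by rewrite !fjoinl.
by rewrite !fjoinr.
Qed.

Lemma fH_prod (K : fieldType) (n : nat) (a : 'I_n -> K) (B : 'M[K]_n) H1 H2 psi :
  fH a B (LHprod H1 H2) psi = fH a B H1 psi * fH a B H2 psi.
Proof.
rewrite /fH /= sum_fjoin big_distrl /=; apply: eq_bigr => c1 _.
rewrite mulr_sumr; apply: eq_bigr => c2 _.
rewrite big_split_ord big_cat !big_map /=.
under eq_bigr do rewrite fjoinl.
have -> : \prod_(i < hm H2) a (fjoin c1 c2 (rshift (hm H1) i)) = \prod_(i < hm H2) a (c2 i).
  by apply: eq_bigr => i _; rewrite fjoinr.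
have -> : \prod_(j <- hed H1) B (fjoin psi (fjoin c1 c2) (r1 (hm H2) j.1))
     (fjoin psi (fjoin c1 c2) (r1 (hm H2) j.2)) =
   \prod_(e <- hed H1) B (fjoin psi c1 e.1) (fjoin psi c1 e.2).
  by apply: eq_bigr => e _; rewrite !fjoin_r1.
have -> : \prod_(j <- hed H2) B (fjoin psi (fjoin c1 c2) (@r2 n (hm H1) _ j.1))
     (fjoin psi (fjoin c1 c2) (@r2 n (hm H1) _ j.2)) =
   \prod_(e <- hed H2) B (fjoin psi c2 e.1) (fjoin psi c2 e.2).
  by apply: eq_bigr => e _; rewrite !fjoin_r2.
ring.
Qed.

Definition unlab (n : nat) (i0 : 'I_n) (H : lgraph n) : graph1 :=
  @Graph1 (n + hm H) (lshift (hm H) i0) (hed H).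

Lemma Tl_unlab (K : fieldType) (n : nat) (a : 'I_n -> K) (B : 'M[K]_n) i0 H j :
  Tl a B (unlab i0 H) j =
  \sum_(psi : {ffun 'I_n -> 'I_n} | psi i0 == j) (\prod_k a (psi k)) * fH a B H psi.
Proof.
rewrite /Tl /= big_mkcond /= (sum_fjoin (p := n) (q := hm H)) [RHS]big_mkcond /=.
apply: eq_bigr => psi _.
under eq_bigr do rewrite fjoinl.
case: eqP => _; last by apply: big1.
rewrite /fH mulr_sumr; apply: eq_bigr => chi _.
rewrite /Wt /= big_split_ord /=.
under eq_bigr do rewrite fjoinl.
have -> : \prod_(i < hm H) a (fjoin psi chi (rshift n i)) = \prod_(i < hm H) a (chi i).
  by apply: eq_bigr => i _; rewrite fjoinr.
by rewrite mulrA.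
Qed.

Definition Hedge (n : nat) (k l : 'I_n) : lgraph n := @LG n 0 [:: (lshift 0 k, lshift 0 l)].

Lemma fH_edge (K : fieldType) (n : nat) (a : 'I_n -> K) (B : 'M[K]_n) k l psi :
  fH a B (Hedge k l) psi = B (psi k) (psi l).
Proof.
rewrite /fH /=.
under eq_bigr do rewrite big_ord0 big_seq1 mul1r !fjoinl.
by rewrite sumr_const card_ffun card_ord (card_ord 0) expn0 mulr1n.
Qed.

Definition Hstar (n : nat) (s : seq 'I_n) : lgraph n :=
  @LG n 1 [seq (lshift 1 k, rshift n ord0) | k <- s].

Lemma fH_star (K : fieldType) (n : nat) (a : 'I_n -> K) (B : 'M[K]_n) s psi :
  fH a B (Hstar s) psi = \sum_x a x * \prod_(k <- s) B (psi k) x.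
Proof.
rewrite /fH /= (sum_fext (ord0 : 'I_1)); apply: eq_bigr => x _.
have E1 : forall g : {ffun 'I_0 -> 'I_n}, \prod_(u < 1) a (fext (ord0 : 'I_1) x g u) = a x.
  by move=> g; rewrite big_ord1 fext_lab.
have E : forall g : {ffun 'I_0 -> 'I_n},
  \prod_(e <- [seq (lshift 1 k, rshift n ord0) | k <- s])
        B (fjoin psi (fext (ord0 : 'I_1) x g) e.1) (fjoin psi (fext (ord0 : 'I_1) x g) e.2)
   = \prod_(k <- s) B (psi k) x.
  by move=> g; rewrite big_map; apply: eq_bigr => k _; rewrite fjoinl fjoinr fext_lab.
rewrite (eq_bigr (fun _ => a x * \prod_(k <- s) B (psi k) x)); last first.
  by move=> g _; congr (_ * _); [exact: E1 | exact: E].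
by rewrite sumr_const card_ffun card_ord (card_ord 0) expn0 mulr1n.
Qed.

Lemma Bsym (K : fieldType) (n : nat) (B : 'M[K]_n) : B^T = B -> forall i j, B i j = B j i.
Proof. by move=> E i j; rewrite -{1}E mxE. Qed.

Lemma tf_eq (K : fieldType) (n : nat) (B : 'M[K]_n) : twin_free B ->
  forall i j, (forall k, B i k = B j k) -> i = j.
Proof. by move=> tf i j E; apply: tf; apply/rowP => k; rewrite !mxE. Qed.

Definition mon (K : fieldType) (n : nat) (B : 'M[K]_n) (s : seq 'I_n) (y : 'I_n) : K :=
  \prod_(k <- s) B k y.

Lemma a_pres (K : fieldType) (n : nat) (a : 'I_n -> K) (B : 'M[K]_n) (psi : 'I_n -> 'I_n) :
  B^T = B -> twin_free B -> injective psi ->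
  (forall k l, B (psi k) (psi l) = B k l) ->
  (forall s, \sum_x a x * \prod_(k <- s) B (psi k) x = \sum_x a x * \prod_(k <- s) B k x) ->
  forall y, a (psi y) = a y.
Proof.
move=> sB tf inj HB Hs y0.
set w := fun y => a (psi y) - a y.
have Hw : forall s, \sum_y w y * mon B s y = 0.
  move=> s; have := Hs s; rewrite (reindex_inj inj) /=.
  under eq_bigr do (under eq_bigr do rewrite HB).
  move=> E; rewrite /w.
  under eq_bigr do rewrite mulrBl.
  by rewrite sumrB /mon E subrr.
have [f [Hf H1 H0]] := span_indicator (g := mon B) (gm := @cat _) (u := [::])
   (fun s t y => big_cat _ _ _ _ _) (fun y => big_nil _ _ _ _) y0.
have := span_lin Hw Hf.
rewrite (bigD1 y0) //= H1 // big1 ?addr0 ?mulr1; first by move/eqP; rewrite subr_eq0 => /eqP.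
move=> y ny; rewrite H0 ?mulr0 // => Hy; move/eqP: ny; apply.
apply: (tf_eq tf) => k; rewrite (Bsym sB y) (Bsym sB y0).
by have := Hy [:: k]; rewrite /mon !big_seq1.
Qed.

Definition idf (n : nat) : {ffun 'I_n -> 'I_n} := [ffun k => k].

Lemma cls_aut (K : fieldType) (n : nat) (a : 'I_n -> K) (B : 'M[K]_n) (psi : {ffun 'I_n -> 'I_n}) :
  B^T = B -> twin_free B -> (forall H, fH a B H psi = fH a B H (idf n)) ->
  [/\ injective psi, forall k, a (psi k) = a k & forall k l, B (psi k) (psi l) = B k l].
Proof.
move=> sB tf Hc.
have HB : forall k l, B (psi k) (psi l) = B k l.
  by move=> k l; have := Hc (Hedge k l); rewrite !fH_edge !ffunE.
have inj : injective psi.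
  move=> k l E; apply: (tf_eq tf) => j.
  by rewrite -HB -[RHS]HB E.
split => //; apply: (a_pres sB tf inj HB) => s.
have := Hc (Hstar s); rewrite !fH_star => ->.
by apply: eq_bigr => x _; congr (_ * _); apply: eq_bigr => k _; rewrite ffunE.
Qed.

Definition Qf (K : fieldType) (n : nat) (a : 'I_n -> K) (i : 'I_n) (f : {ffun 'I_n -> 'I_n} -> K) k : K :=
  \sum_(psi : {ffun 'I_n -> 'I_n} | psi i == k) (\prod_m a (psi m)) * f psi.

Lemma Qf_w (K : fieldType) (n : nat) (a : 'I_n -> K) (i j : 'I_n) f :
  \sum_(psi : {ffun 'I_n -> 'I_n}) ((if psi i == j then (\prod_m a (psi m)) / a j else 0) -
            (if psi i == i then (\prod_m a (psi m)) / a i else 0)) * f psi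
  = Qf a i f j / a j - Qf a i f i / a i.
Proof.
under eq_bigr do rewrite mulrBl.
rewrite sumrB /Qf !mulr_suml [in RHS]big_mkcond [X in _ = _ - X]big_mkcond /=.
congr (_ - _); apply: eq_bigr => psi _; case: ifP => _; rewrite ?mul0r //; ring.
Qed.

Lemma lovasz (K : fieldType) (n : nat) (a : 'I_n -> K) (B : 'M[K]_n) :
  [pchar K] =i pred0 -> (forall i, a i != 0) -> B^T = B -> twin_free B ->
  forall i j, (forall F, tv a B F i = tv a B F j) ->
  exists2 g : {perm 'I_n}, g \in autG a B & g i = j.
Proof.
move=> hchar a0 sB tf i j Ht.
have [e [He E1 E0]] := span_indicator (g := fun H psi => fH a B H psi) (gm := @LHprod n)
   (u := LH1 n) (fun H1 H2 psi => fH_prod a B H1 H2 psi) (fun psi => fH_LH1 a B psi) (idf n).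
have key : Qf a i e j / a j - Qf a i e i / a i = 0.
  rewrite -Qf_w; apply: (span_lin _ He) => H.
  rewrite Qf_w /Qf.
  rewrite -!Tl_unlab.
  have := Ht (unlab i H); rewrite /tv => ->.
  by rewrite subrr.
have Ee : forall psi, e psi = 0 \/ (e psi = 1 /\ forall m, a (psi m) = a m).
  move=> psi; case: (classic (forall H, fH a B H psi = fH a B H (idf n))) => c.
    by right; split; [exact: E1 | case: (cls_aut sB tf c)].
  by left; exact: E0.
have Qi : Qf a i e i != 0.
  have -> : Qf a i e i = (\prod_m a m) * \sum_(psi : {ffun 'I_n -> 'I_n} | psi i == i) e psi.
    rewrite /Qf mulr_sumr; apply: eq_bigr => psi _.
    case: (Ee psi) => [->|[-> Ha]]; first by rewrite !mulr0.
    by congr (_ * _); apply: eq_bigr => m _; rewrite Ha.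
  rewrite mulf_neq0 //; first by rewrite prodf_seq_neq0; apply/allP => m _; rewrite a0.
  have -> : \sum_(psi : {ffun 'I_n -> 'I_n} | psi i == i) e psi =
            \sum_(psi : {ffun 'I_n -> 'I_n} | (psi i == i) && (e psi == 1)) 1.
    rewrite big_mkcondr /=; apply: eq_bigr => psi _.
    case: (Ee psi) => [->|[-> _]]; last by rewrite eqxx.
    by rewrite eq_sym oner_eq0.
  rewrite sumr_const.
  have := (pcharf0P K).1 hchar; move=> ->.
  rewrite -lt0n; apply/card_gt0P; exists (idf n).
  by rewrite unfold_in /= ffunE eqxx /= E1.
have Qj : Qf a i e j != 0.
  apply/eqP => Q0; move: key; rewrite Q0 mul0r sub0r => /eqP; rewrite oppr_eq0 mulf_eq0.
  by rewrite (negbTE Qi) invr_eq0 (negbTE (a0 i)).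
case: (pickP (fun psi : {ffun 'I_n -> 'I_n} => (psi i == j) && ((\prod_m a (psi m)) * e psi != 0)))
  => [psi /andP [Hpi Hne] | none]; last first.
  move/eqP: Qj; case; apply: big1 => psi Hpi.
  by move: (none psi); rewrite Hpi /= => /negbFE/eqP.
have c : forall H, fH a B H psi = fH a B H (idf n).
  apply: NNPP => c; move: Hne; rewrite (E0 _ c) mulr0 eqxx //.
have [inj Ha HB] := cls_aut sB tf c.
exists (perm inj); last by rewrite permE; apply/eqP.
rewrite inE; apply/andP; split; apply/forallP => k; rewrite ?permE ?Ha //.
by apply/forallP => l; rewrite !permE HB.
Qed.

Lemma bil_aux (K : fieldType) (n : nat) (a : 'I_n -> K) (S : K) (f h : 'I_n -> K) :
  \sum_x (a x * (S * f x - \sum_y a y * f y)) * h x =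
  S * (\sum_x a x * (f x * h x)) - (\sum_y a y * f y) * (\sum_x a x * h x).
Proof.
rewrite mulr_sumr mulr_sumr -sumrB; apply: eq_bigr => x _; ring.
Qed.

Lemma fwd (K : fieldType) (n : nat) (a : 'I_n -> K) (B : 'M[K]_n) :
  [pchar K] =i pred0 -> (forall i, a i != 0) -> B^T = B -> twin_free B ->
  \sum_i a i != 0 ->
  (forall F1 F2, Defs.hom a B F1 * Defs.hom a B F2 = (\sum_i a i) * Defs.hom a B (glue F1 F2)) ->
  transitive_on_all (autG a B).
Proof.
move=> hchar a0 sB tf S0 Hm.
set S := \sum_i a i in S0 Hm.
pose g := fun F i => tv a B F i.
have gm : forall F1 F2 x, g (glue F1 F2) x = g F1 x * g F2 x by move=> F1 F2 x; exact: tv_glue.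
have gu : forall x, g g0 x = 1 by move=> x; exact: tv_g0.
have Hgen : forall F1 F2, S * (\sum_x a x * (g F1 x * g F2 x)) =
    (\sum_y a y * g F1 y) * (\sum_x a x * g F2 x).
  move=> F1 F2.
  have -> : \sum_x a x * (g F1 x * g F2 x) = Defs.hom a B (glue F1 F2).
    by rewrite hom_tv //; apply: eq_bigr => x _; rewrite -gm.
  by rewrite -Hm !hom_tv.
have bil1 : forall f F2, inspan g f -> S * (\sum_x a x * (f x * g F2 x)) =
    (\sum_y a y * f y) * (\sum_x a x * g F2 x).
  move=> f F2 Hf; apply/eqP; rewrite -subr_eq0; apply/eqP.
  have -> : S * (\sum_x a x * (f x * g F2 x)) - (\sum_y a y * f y) * (\sum_x a x * g F2 x)
     = S * (\sum_x a x * (g F2 x * f x)) - (\sum_y a y * g F2 y) * (\sum_x a x * f x).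
    by rewrite [X in _ - X]mulrC; congr (_ * _ - _); apply: eq_bigr => x _; rewrite (mulrC (f x)).
  rewrite -bil_aux; apply: (span_lin _ Hf) => F1.
  by rewrite bil_aux Hgen subrr.
have bil : forall f h, inspan g f -> inspan g h -> S * (\sum_x a x * (f x * h x)) =
    (\sum_y a y * f y) * (\sum_x a x * h x).
  move=> f h Hf Hh; apply/eqP; rewrite -subr_eq0; apply/eqP.
  rewrite -bil_aux; apply: (span_lin _ Hh) => F2.
  by rewrite bil_aux bil1 // subrr.
have cls_ind : forall i0, exists f, [/\ inspan g f,
     forall y, (forall F, g F y = g F i0) -> f y = 1,
     forall y, ~ (forall F, g F y = g F i0) -> f y = 0 &
     \sum_y a y * f y = S].
  move=> i0.
  have [f [Hf H1 H0]] := span_indicator (g := g) (gm := glue) (u := g0) gm gu i0.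
  have f01 : forall y, f y = 0 \/ (f y = 1 /\ a y = a i0).
    move=> y; case: (classic (forall F, g F y = g F i0)) => c; last by left; apply: H0.
    right; split; first exact: H1.
    have [g' Hg' <-] := lovasz hchar a0 sB tf (i := i0) (j := y) (fun F => esym (c F)).
    by move: Hg'; rewrite inE => /andP [/forallP /(_ i0) /eqP].
  have Ec : \sum_y a y * f y = a i0 * \sum_y f y.
    rewrite mulr_sumr; apply: eq_bigr => y _.
    by case: (f01 y) => [->|[-> ->]]; rewrite ?mulr0.
  have c0 : \sum_y a y * f y != 0.
    rewrite Ec mulf_neq0 //.
    have -> : \sum_y f y = \sum_(y | f y == 1) 1.
      rewrite [RHS]big_mkcond /=; apply: eq_bigr => y _.
      by case: (f01 y) => [->|[-> _]]; rewrite ?eqxx // eq_sym oner_eq0.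
    rewrite sumr_const; have := (pcharf0P K).1 hchar; move=> ->.
    rewrite -lt0n; apply/card_gt0P; exists i0.
    by rewrite unfold_in /= (H1 i0 (fun F => erefl)); apply/eqP.
  exists f; split => //.
  have := bil f f Hf Hf.
  have -> : \sum_x a x * (f x * f x) = \sum_x a x * f x.
    by apply: eq_bigr => x _; case: (f01 x) => [->|[-> _]]; rewrite ?mulr0 ?mulr1.
  by move/(mulIf c0).
move=> i j.
have cl : forall F, g F i = g F j.
  apply: NNPP => nc.
  have [fi [Hfi Hi1 Hi0 Hsi]] := cls_ind i.
  have [fj [Hfj Hj1 Hj0 Hsj]] := cls_ind j.
  have := bil fi fj Hfi Hfj; rewrite Hsi Hsj.
  have -> : \sum_x a x * (fi x * fj x) = 0.
    apply: big1 => y _.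
    case: (classic (forall F, g F y = g F i)) => ci; last by rewrite Hi0 // mul0r mulr0.
    case: (classic (forall F, g F y = g F j)) => cj; last by rewrite (Hj0 y) // mulr0 mulr0.
    by exfalso; apply: nc => F; rewrite -ci cj.
  move/eqP; rewrite mulr0 eq_sym mulf_eq0 orbb => /eqP S00.
  by move/eqP: S0; apply.
exact: (lovasz hchar a0 sB tf cl).
Qed.

Lemma Tl_aut (K : fieldType) (n : nat) (a : 'I_n -> K) (B : 'M[K]_n) (F : graph1) (g : {perm 'I_n}) i :
  g \in autG a B -> Tl a B F (g i) = Tl a B F i.
Proof.
rewrite inE => /andP [/forallP Ha /forallP HB].
rewrite /Tl (reindex_inj (h := fun phi : {ffun 'I_(nv F) -> 'I_n} => [ffun v => g (phi v)])) /=; last first.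
  move=> p q E; apply/ffunP => v; apply: (@perm_inj _ g).
  by move/ffunP: E => /(_ v); rewrite !ffunE.
apply: eq_big => phi; first by rewrite ffunE (inj_eq (@perm_inj _ g)).
move=> _; rewrite /Wt; congr (_ * _).
  by apply: eq_bigr => v _; rewrite ffunE; apply/eqP.
by apply: eq_bigr => e _; rewrite !ffunE; move: (HB (phi e.1)) => /forallP /(_ (phi e.2)) /eqP.
Qed.

Lemma bwd (K : fieldType) (n : nat) (a : 'I_n -> K) (B : 'M[K]_n) :
  (0 < n)%N -> (forall i, a i != 0) -> transitive_on_all (autG a B) ->
  forall F1 F2, Defs.hom a B F1 * Defs.hom a B F2 = (\sum_i a i) * Defs.hom a B (glue F1 F2).
Proof.
move=> n0 a0 tr F1 F2.
set i0 : 'I_n := Ordinal n0.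
have HT : forall F i, Tl a B F i = Tl a B F i0.
  by move=> F i; have [g Hg <-] := tr i0 i; rewrite Tl_aut.
have Ha : forall i, a i = a i0.
  move=> i; have [g Hg <-] := tr i0 i.
  by move: Hg; rewrite inE => /andP [/forallP /(_ i0) /eqP].
rewrite !hom_Tl.
have -> : \sum_i Tl a B (glue F1 F2) i = \sum_(i < n) (Tl a B F1 i0 * Tl a B F2 i0 / a i0).
  apply: eq_bigr => i _; rewrite -(HT F1 i) -(HT F2 i) -(Ha i) -Tl_glue.
  by rewrite [a i * _]mulrC mulfK.
have ST : forall F, \sum_i Tl a B F i = Tl a B F i0 *+ n.
  by move=> F; rewrite (eq_bigr _ (fun i _ => HT F i)) sumr_const card_ord.
have Sa : \sum_i a i = a i0 *+ n.
  by rewrite (eq_bigr _ (fun i _ => Ha i)) sumr_const card_ord.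
rewrite !ST Sa sumr_const card_ord.
have := a0 i0; set x := a i0; set y := Tl a B F1 i0; set z := Tl a B F2 i0; move=> x0.
rewrite -[y *+ n]mulr_natr -[z *+ n]mulr_natr -[x *+ n]mulr_natr -[y * z / x *+ n]mulr_natr.
by field.
Qed.



Unset Implicit Arguments.

Theorem lemma2p2 (K : fieldType) (n : nat) (a : 'I_n -> K) (B : 'M[K]_n) :
  [pchar K] =i pred0 ->
  (0 < n)%N ->
  (forall i, a i != 0) ->
  B^T = B ->
  twin_free B ->
  \sum_i a i != 0 ->
  (forall F1 F2 : graph1,
      hdens a B F1 * hdens a B F2 = hdens a B (glue F1 F2))
  <-> transitive_on_all (autG a B).
Proof.
move=> hchar n0 a0 sB tf S0; split.
- move=> H; apply: fwd => // F1 F2; apply: (proj1 (@hyp_equiv K n a B F1 F2 S0)); exact: H.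
- move=> T F1 F2; apply: (proj2 (@hyp_equiv K n a B F1 F2 S0)); exact: bwd.
Qed.
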